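(* Let $n \ge 2$, let $\lambda_1,\ldots,\lambda_n \in \mathbb{C}$, let $F$ be the $n$-by-$n$ discrete Fourier transform matrix, i.e. $f_{ij} = \omega^{(i-1)(j-1)}/\sqrt{n}$ with $\omega := \exp(-2\pi i/n)$, let $D = \operatorname{diag}(\lambda_1,\ldots,\lambda_n)$, and let $A = FDF^\ast$. Then for each $k \in \{1,\ldots,n\}$, the field of values $F(A_{(k)})$ is inscribed in the polygon $\partial \operatorname{co}(\lambda_1,\ldots,\lambda_n)$, and the points of tangency (the points where $F(A_{(k)})$ meets the sides of this polygon) occur at the midpoints of the sides of $\partial\operatorname{co}(\lambda_1,\ldots,\lambda_n)$.
   Context: For $B \in \mathsf{M}_m(\mathbb{C})$, the field of values is $F(B) = \{x^\ast B x : x \in \mathbb{C}^m,\ x^\ast x = 1\}$. $A_{(k)}$ denotes the $(n-1)$-by-$(n-1)$ principal submatrix of $A$ obtained by deleting its $k$th row and column. $\operatorname{co}$ denotes convex hull. Label the vertices of the convex polygon $\operatorname{co}(\lambda_1,\ldots,\lambda_n)$ consecutively along its boundary as $\mu_1,\ldots,\mu_d$, so that its sides are $\operatorname{co}(\mu_j,\mu_{j+1})$, $j=1,\ldots,d$, with $\mu_{d+1} := \mu_1$. A set $G$ is inscribed in the polygon if $G \cap \operatorname{co}(\mu_j,\mu_{j+1}) \neq \emptyset$ for all $j \in \{1,\ldots,d\}$. *)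

(* Defs.v *)
From HB Require Import structures.
From mathcomp Require Import all_boot all_order all_algebra.
From mathcomp Require Import reals trigo.
From mathcomp Require Import complex.
Set Implicit Arguments. Unset Strict Implicit. Unset Printing Implicit Defensive.
Import Order.TTheory GRing.Theory Num.Theory.
Local Open Scope ring_scope.

Section Defs.
Variable R : realType.
Local Notation C := R[i].

Definition ctrmx {m p : nat} (B : 'M[C]_(m, p)) : 'M[C]_(p, m) :=
  (map_mx Num.conj B)^T.

Definition field_of_values {m : nat} (B : 'M[C]_m) (z : C) : Prop :=
  exists x : 'cV[C]_m, ctrmx x *m x = 1%:M /\ ctrmx x *m B *m x = z%:M.

Definition delete_rc {n : nat} (A : 'M[C]_n) (k : 'I_n) : 'M[C]_n.-1 :=
  row' k (col' k A).

(* omega = exp(-2 pi i / n) = cos(2pi/n) - i sin(2pi/n) *)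
Definition dft_omega (n : nat) : C :=
  Complex (cos (2 * pi / n%:R)) (- sin (2 * pi / n%:R)).

(* DFT matrix, 0-based indices: f_ij = omega^(i j) / sqrt n *)
Definition dft_matrix (n : nat) : 'M[C]_n :=
  \matrix_(i < n, j < n) (dft_omega n ^+ (i * j) / Complex (Num.sqrt (n%:R : R)) 0).

Definition co {m : nat} (p : 'I_m -> C) (z : C) : Prop :=
  exists t : 'I_m -> C, (forall i, 0 <= t i) /\ \sum_i t i = 1 /\
                        z = \sum_i t i * p i.

Definition segment (mu nu : C) (z : C) : Prop :=
  exists t : C, 0 <= t <= 1 /\ z = (1 - t) * mu + t * nu.

Definition is_vertex {m : nat} (lam : 'I_m -> C) (mu : C) : Prop :=
  (exists i, lam i = mu) /\
  ~ (exists t : 'I_m -> C, (forall i, 0 <= t i) /\ \sum_i t i = 1 /\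
       (forall i, lam i = mu -> t i = 0) /\ mu = \sum_i t i * lam i).

(* co(mu, nu) is a side co(mu_j, mu_{j+1}) of the polygon boundary: mu and nu are
   consecutive vertices, i.e. either the polygon is the single point mu = nu
   (d = 1), or mu <> nu are vertices and all lam_i lie in one closed half-plane
   bounded by the line through mu and nu. *)
Definition is_side {m : nat} (lam : 'I_m -> C) (mu nu : C) : Prop :=
  is_vertex lam mu /\ is_vertex lam nu /\
  (if mu == nu then forall i, lam i = mu
   else (forall i, 0 <= 'Im ((lam i - mu) * Num.conj (nu - mu))) \/
        (forall i, 'Im ((lam i - mu) * Num.conj (nu - mu)) <= 0)).

Definition inscribed {m : nat} (lam : 'I_m -> C) (G : C -> Prop) : Prop :=
  forall mu nu, is_side lam mu nu -> exists z, G z /\ segment mu nu z.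

End Defs.

(* Main.v *)
Require Import Defs.
From HB Require Import structures.
From mathcomp Require Import all_boot all_order all_algebra.
From mathcomp Require Import reals trigo.
From mathcomp Require Import complex.
From mathcomp Require Import ring lra zify.
Import Order.TTheory GRing.Theory Num.Theory.
Local Open Scope ring_scope.

Section Trig.
Variable R : realType.
Variable n : nat.
Hypothesis n2 : (2 <= n)%N.
Local Notation C := R[i].
Local Notation th := (2 * pi / n%:R : R).

Lemma omegaX m : dft_omega R n ^+ m = Complex (cos (m%:R * th)) (- sin (m%:R * th)).
Proof.
elim: m => [|m IH]; first by rewrite expr0 mul0r cos0 sin0 oppr0.
rewrite exprSr IH /dft_omega.
set t := (2 * pi / n%:R).
have -> : m.+1%:R * t = m%:R * t + t by rewrite -natr1 mulrDl mul1r.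
rewrite -[(_ +i* _)%C * (_ +i* _)%C]/(_ +i* _)%C.
by rewrite cosD sinD; congr Complex; ring.
Qed.

Lemma nR0 : (n%:R : R) != 0.
Proof. by rewrite pnatr_eq0; case: n n2. Qed.

Lemma omegan : dft_omega R n ^+ n = 1.
Proof.
rewrite omegaX.
have -> : n%:R * th = pi *+ 2 by rewrite -mulr_natl; field; rewrite nR0.
by rewrite cos2pi sin2pi oppr0.
Qed.

Lemma omega_neq1 m : (0 < m < n)%N -> dft_omega R n ^+ m != 1.
Proof.
move=> /andP [m0 mn]; rewrite omegaX.
apply/negP => /eqP [] hc _.
set x := m%:R * th in hc.
have hx : x = (x / 2) *+ 2 by rewrite -mulr_natr mulfVK // pnatr_eq0.
have hs : 0 < sin (x / 2).
  apply: sin_gt0_pi.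
  have npos : (0 : R) < n%:R by rewrite ltr0n; case: n n2.
  have mpos : (0 : R) < m%:R by rewrite ltr0n.
  have mlt : (m%:R : R) < n%:R by rewrite ltr_nat.
  have pp := pi_gt0 R.
  have -> : x / 2 = m%:R * pi / n%:R by rewrite /x; field; rewrite nR0.
  apply/andP; split; first by rewrite divr_gt0 // mulr_gt0.
  by rewrite ltr_pdivrMr // mulrC ltr_pM2l.
move: hc; rewrite hx cos_mulr2n cos2sin2 => hc.
have : sin (x / 2) ^+ 2 = 0 by move: hc; lra.
by move/eqP; rewrite expf_eq0 /= gt_eqF.
Qed.

End Trig.
Section Mat.
Variable R : realType.
Variable n : nat.
Hypothesis n2 : (2 <= n)%N.
Local Notation C := R[i].
Local Notation w := (dft_omega R n).
Local Notation s := (Complex (Num.sqrt (n%:R : R)) 0).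

Lemma s_isreal : s \is Num.real.
Proof.
apply: ger0_real.
by rewrite -[Complex _ 0]/((Num.sqrt (n%:R : R))%:C)%C ler0c sqrtr_ge0.
Qed.

Lemma s_real : Num.conj s = s.
Proof. exact: conj_Creal s_isreal. Qed.

Lemma sV_real : Num.conj s^-1 = s^-1.
Proof. by apply: conj_Creal; rewrite realV s_isreal. Qed.

Lemma s_sqr : s ^+ 2 = n%:R.
Proof.
rewrite -[Complex _ 0]/((Num.sqrt (n%:R : R))%:C)%C -rmorphXn sqr_sqrtr ?ler0n //.
by rewrite rmorph_nat.
Qed.

Lemma s_neq0 : s != 0.
Proof.
apply/negP => /eqP h; have := s_sqr; rewrite h expr0n /= => /eqP.
by rewrite eq_sym pnatr_eq0; case: n n2.
Qed.

Lemma w_norm : `|w| = 1.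
Proof.
apply/eqP; rewrite -(@pexpr_eq1 _ _ n) ?normr_ge0 //; last by case: n n2.
by rewrite -normrX omegan // normr1.
Qed.

Lemma w_conj : w * Num.conj w = 1.
Proof. by rewrite -normCK w_norm expr1n. Qed.

Lemma w_neq0 : w != 0.
Proof. by apply/negP => /eqP h; have := w_conj; rewrite h mul0r => /eqP; rewrite eq_sym oner_eq0. Qed.

Lemma w_conjE : Num.conj w = w ^+ n.-1.
Proof.
apply: (mulfI w_neq0); rewrite w_conj -exprS prednK ?omegan //.
by case: n n2.
Qed.

Lemma geo_sum (r : C) : r ^+ n = 1 -> r != 1 -> \sum_(l < n) r ^+ l = 0.
Proof.
move=> hn h1; have := subrX1 r n; rewrite hn subrr => /esym /eqP.
by rewrite mulf_eq0 subr_eq0 (negbTE h1) /= => /eqP.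
Qed.

Lemma wX_mod m : w ^+ m = w ^+ (m %% n).
Proof. by rewrite {1}(divn_eq m n) exprD mulnC exprM omegan // expr1n mul1r. Qed.

Lemma unitary : ctrmx (dft_matrix R n) *m dft_matrix R n = 1%:M.
Proof.
apply/matrixP => i j; rewrite !mxE.
transitivity (\sum_(l < n) (w ^+ ((n.-1 * i + j)%N)) ^+ l / n%:R).
  apply: eq_bigr => l _; rewrite !mxE rmorphM /= sV_real rmorphXn -[X in X ^+ (l * i)]/(Num.conj w) w_conjE -exprM.
  rewrite mulrACA -invfM -expr2 s_sqr -exprM -exprD.
  by congr (_ ^+ _ / _); nia.
rewrite -mulr_suml.
case: (eqVneq i j) => [<-|hij].
  have -> : w ^+ (n.-1 * i + i) = 1.
    rewrite -{2}[i : nat]mul1n -mulnDl addn1 prednK; last by case: n n2.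
    by rewrite exprM omegan // expr1n.
  rewrite (eq_bigr (fun _ => 1)) => [|l _]; last by rewrite expr1n.
  by rewrite sumr_const card_ord mulfV // pnatr_eq0; case: n n2.
rewrite geo_sum ?mul0r //.
  by rewrite -exprM mulnC exprM omegan // expr1n.
have n0 : (0 < n)%N by exact: ltnW n2.
rewrite wX_mod; apply: omega_neq1 => //; rewrite ltn_mod n0 andbT.
rewrite lt0n; apply/negP => /eqP hm.
move: hij => /negP; apply; apply/eqP/val_inj => /=.
have : (((n.-1 * i + j) + i) %% n = i %% n)%N by rewrite -modnDml hm.
rewrite -addnA [(j + i)%N]addnC addnA -{2}[i : nat]mul1n -mulnDl addn1 prednK //.
by rewrite [(n * i)%N]mulnC modnMDl !modn_small // => ->.
Qed.

End Mat.
Section Main.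
Variable R : realType.
Local Notation C := R[i].

Lemma ctrmxM p q r (M : 'M[C]_(p, q)) (N : 'M[C]_(q, r)) :
  ctrmx (M *m N) = ctrmx N *m ctrmx M.
Proof. by rewrite /ctrmx map_mxM trmx_mul. Qed.

Variable n : nat.
Hypothesis n2 : (2 <= n)%N.
Variable k : 'I_n.

Lemma sum_lift (f : 'I_n -> C) : f k = 0 -> \sum_(j < n.-1) f (lift k j) = \sum_j f j.
Proof. by move=> h; rewrite (bigD1_ord k) //= h add0r. Qed.

Lemma norm_row (X : 'cV[C]_n) : X k 0 = 0 ->
  ctrmx (row' k X) *m row' k X = ctrmx X *m X.
Proof.
move=> h; apply/matrixP => i j; rewrite !ord1 !mxE -sum_lift; last by rewrite !mxE h mulr0.
by apply: eq_bigr => l _; rewrite !mxE.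
Qed.

Lemma quad_row (X : 'cV[C]_n) (M : 'M[C]_n) : X k 0 = 0 ->
  ctrmx (row' k X) *m row' k (col' k M) *m row' k X = ctrmx X *m M *m X.
Proof.
move=> h; apply/matrixP => i j; rewrite !ord1 !mxE -sum_lift; last by rewrite !mxE h mulr0.
apply: eq_bigr => l _; rewrite !mxE; congr (_ * _).
rewrite -sum_lift; last by rewrite !mxE h conjC0 mul0r.
by apply: eq_bigr => l' _; rewrite !mxE.
Qed.


Lemma sum2 (a b : 'I_n) (f : 'I_n -> C) : a != b ->
  (forall j, j != a -> j != b -> f j = 0) -> \sum_j f j = f a + f b.
Proof.
move=> ab h; rewrite (bigD1 a) //= (bigD1 b) 1?eq_sym //= big1 ?addr0 ?addrA //.
by move=> j /andP [ja jb]; apply: h.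
Qed.

Local Notation w := (dft_omega R n).
Local Notation s := (Complex (Num.sqrt (n%:R : R)) 0).

Lemma wX_conj m : Num.conj (w ^+ m) * w ^+ m = 1.
Proof. by rewrite rmorphXn -exprMn mulrC w_conj // expr1n. Qed.

Lemma cnormM (c v : C) : Num.conj (c * v) * (c * v) = Num.conj c * c * (Num.conj v * v).
Proof. rewrite rmorphM /=; ring. Qed.

Lemma cnormN (c : C) : Num.conj (- c) * (- c) = Num.conj c * c.
Proof. rewrite rmorphN /=; ring. Qed.

Variable lam : 'I_n -> C.

Lemma key (a b : 'I_n) : a != b ->
  let F := dft_matrix R n in
  let A := F *m diag_mx (\row_i lam i) *m ctrmx F in
  field_of_values (delete_rc A k) ((lam a + lam b) / 2).
Proof.
move=> ab F A.
have ba : b != a by rewrite eq_sym.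
pose u : C := sqrtC (2^-1).
have ureal : Num.conj u = u.
  by apply: conj_Creal; apply: ger0_real; rewrite sqrtC_ge0 invr_ge0 ler0n.
have usq : Num.conj u * u = 2^-1 by rewrite ureal -expr2 sqrtCK.
pose y : 'cV[C]_n := \col_j (if j == a then w ^+ (k * b) * u
                              else if j == b then - (w ^+ (k * a) * u) else 0).
pose X := F *m y.
have Xk : X k 0 = 0.
  rewrite !mxE (sum2 a b _ ab) => [|j ja jb]; last by rewrite !mxE (negbTE ja) (negbTE jb) mulr0.
  by rewrite !mxE eqxx (negbTE ba) eqxx; ring.
have FF : ctrmx F *m F = 1%:M by apply: unitary.
exists (row' k X); split.
  rewrite norm_row // /X ctrmxM -mulmxA (mulmxA (ctrmx F)) FF mul1mx.
  apply/matrixP => i j; rewrite !ord1 !mxE (sum2 a b _ ab) => [|l la lb]; last first.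
    by rewrite !mxE (negbTE la) (negbTE lb) mulr0.
  rewrite !mxE eqxx (negbTE ba) eqxx /=.
  rewrite cnormN !cnormM !wX_conj usq !mul1r.
  by field.
rewrite /delete_rc (quad_row _ _ Xk) /X /A !ctrmxM.
rewrite !mulmxA -(mulmxA (ctrmx y) (ctrmx F) F) FF mulmx1.
rewrite -(mulmxA (ctrmx y *m diag_mx (\row_i lam i)) (ctrmx F) F) FF mulmx1.
rewrite mul_mx_diag.
apply/matrixP => i j; rewrite !ord1 !mxE (sum2 a b _ ab) => [|l la lb]; last first.
  by rewrite !mxE (negbTE la) (negbTE lb) mulr0.
rewrite !mxE eqxx (negbTE ba) eqxx /=.
rewrite mulrAC cnormM wX_conj usq mul1r.
rewrite mulrAC cnormN cnormM wX_conj usq mul1r.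
by rewrite mulrDl mulrC [_ * lam b]mulrC.
Qed.

End Main.

Theorem mainTheorem4 (R : realType) (n : nat) (lam : 'I_n -> R[i]) :
  (2 <= n)%N ->
  let F := dft_matrix R n in
  let A := F *m diag_mx (\row_i lam i) *m ctrmx F in
  forall k : 'I_n,
    inscribed lam (field_of_values (delete_rc A k)) /\
    (forall mu nu, is_side lam mu nu ->
       field_of_values (delete_rc A k) ((mu + nu) / 2)).
Proof.
move=> n2 F A k.
have mid : forall mu nu, is_side lam mu nu ->
    field_of_values (delete_rc A k) ((mu + nu) / 2).
  move=> mu nu [[[i hi] _] [[[j hj] _] hs]].
  case: (eqVneq mu nu) => [e|ne].
    move: hs; have -> : (mu == nu) = true by apply/eqP.
    move=> hs.
    have [b hb] : exists b : 'I_n, b != i.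
      pose o0 : 'I_n := Ordinal (ltnW n2).
      pose o1 : 'I_n := Ordinal n2.
      case: (eqVneq i o0) => [->|h]; last by exists o0; rewrite eq_sym.
      by exists o1.
    by have := key _ _ n2 k lam _ _ hb; rewrite -e !hs.
  have ij : i != j by apply/negP => /eqP e; move: ne; rewrite -hi -hj e eqxx.
  by have := key _ _ n2 k lam _ _ ij; rewrite hi hj.
split => //.
move=> mu nu hs; exists ((mu + nu) / 2); split; first exact: mid.
exists (2^-1); split.
  by rewrite invr_ge0 ler0n /= invf_le1 ?ltr0n // ler1n.
by field.
Qed.
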